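(* Let $n\ge1$, $\mathcal{X}$ the simplex in $\mathbb{R}^{n+1}$, $\theta$ a kernel, $\Phi$ a Lipschitz continuous smooth function on an open neighborhood of $\mathcal{X}$, and $\eta>0$. If $x(t)$ is a solution trajectory of the inertial dynamics (ID) in $\mathcal{X}^\circ$ that is defined for all $t\ge0$, then $\lim_{t\to\infty}\dot x(t)=0$.
   Context: $\mathcal{X}=\{x\in\mathbb{R}^{n+1}:x_\alpha\ge0,\sum_\alpha x_\alpha=1\}$ with relative interior $\mathcal{X}^\circ$. A kernel is a $C^\infty$ function $\theta:[0,\infty)\to\mathbb{R}\cup\{+\infty\}$ with $\theta(x)<\infty$ for $x>0$, $\lim_{x\to0^+}\theta'(x)=-\infty$, $\theta''>0$, $\theta'''<0$ on $(0,\infty)$. With $\theta''_\alpha=\theta''(x_\alpha)$, $\theta'''_\alpha=\theta'''(x_\alpha)$, $\Theta''=(\sum_\beta1/\theta''_\beta)^{-1}$, $v_\alpha=\partial\Phi/\partial x_\alpha$, the inertial dynamics (ID) on $\mathcal{X}^\circ$ are $$\ddot x_\alpha=\frac{1}{\theta''_\alpha}\Big[v_\alpha-\sum_{\beta}\frac{\Theta''}{\theta''_\beta}v_\beta\Big]-\frac{1}{2\theta''_\alpha}\Big[\theta'''_\alpha\dot x_\alpha^2-\sum_\beta\frac{\Theta''}{\theta''_\beta}\theta'''_\beta\dot x_\beta^2\Big]-\eta\dot x_\alpha.$$ *)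

(* Defs.v *)
From HB Require Import structures.
From mathcomp Require Import all_boot all_order all_algebra.
From mathcomp Require Import all_classical all_reals all_analysis.
Set Implicit Arguments. Unset Strict Implicit. Unset Printing Implicit Defensive.
Import Order.TTheory GRing.Theory Num.Theory.
Import numFieldNormedType.Exports.
Local Open Scope classical_set_scope.
Local Open Scope ring_scope.

Section Defs.
Variable R : realType.

Definition simplex (n : nat) : set 'rV[R]_n.+1 :=
  [set p | (forall a : 'I_n.+1, 0 <= p 0 a) /\ \sum_(a < n.+1) p 0 a = 1].

Definition simplex_relint (n : nat) : set 'rV[R]_n.+1 :=
  [set p | (forall a : 'I_n.+1, 0 < p 0 a) /\ \sum_(a < n.+1) p 0 a = 1].

(* A kernel, restricted to (0,oo) (the only part entering (ID)):
   C^oo on (0,oo), theta' -> -oo at 0+, theta'' > 0, theta''' < 0. *)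
Definition is_kernel (theta : R -> R) : Prop :=
  [/\ (forall (k : nat) (y : R), 0 < y -> derivable (derive1n k theta) y 1),
      derive1 theta y @[y --> 0^'+] --> -oo,
      (forall y : R, 0 < y -> 0 < derive1n 2 theta y) &
      (forall y : R, 0 < y -> derive1n 3 theta y < 0)].

Fixpoint iter_dir (V : normedModType R) (vs : seq V) (f : V -> R) : V -> R :=
  match vs with
  | [::] => f
  | v :: vs' => fun p => 'D_v (iter_dir vs' f) p
  end.

Definition smooth_on (V : normedModType R) (U : set V) (f : V -> R) : Prop :=
  (forall (vs : seq V) (v : V) (p : V), U p -> derivable (iter_dir vs f) p v) /\
  (forall (vs : seq V), {within U, continuous (iter_dir vs f)}).

Definition lipschitz_on_set (V : normedModType R) (U : set V) (f : V -> R) : Prop :=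
  exists L : R, forall p q : V, U p -> U q -> `|f p - f q| <= L * `|p - q|.

Definition partial (n : nat) (Phi : 'rV[R]_n.+1 -> R) (a : 'I_n.+1)
  (p : 'rV[R]_n.+1) : R := 'D_(delta_mx 0 a) Phi p.

Definition ID_rhs (n : nat) (theta : R -> R) (Phi : 'rV[R]_n.+1 -> R) (eta : R)
  (p q : 'rV[R]_n.+1) (a : 'I_n.+1) : R :=
  let th2 := fun b : 'I_n.+1 => derive1n 2 theta (p 0 b) in
  let th3 := fun b : 'I_n.+1 => derive1n 3 theta (p 0 b) in
  let Th2 := (\sum_(b < n.+1) (th2 b)^-1)^-1 in
  let v := fun b => partial Phi b p in
  (th2 a)^-1 * (v a - \sum_(b < n.+1) (Th2 / th2 b) * v b)
  - (2 * th2 a)^-1 * (th3 a * (q 0 a) ^+ 2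
                      - \sum_(b < n.+1) (Th2 / th2 b) * th3 b * (q 0 b) ^+ 2)
  - eta * q 0 a.

End Defs.

Arguments simplex {R} n.
Arguments simplex_relint {R} n.

(* Main.v *)
Require Import Defs.
From HB Require Import structures.
From mathcomp Require Import all_boot all_order all_algebra.
From mathcomp Require Import all_classical all_reals all_analysis.
From mathcomp Require Import ring lra.
Import Order.TTheory GRing.Theory Num.Theory.
Import numFieldNormedType.Exports.
Local Open Scope classical_set_scope.
Local Open Scope ring_scope.
Section H.
Variable R : realType.

Lemma coord_der m (y : R -> 'rV[R]_m) t (a : 'I_m) :
  derivable y t 1 -> is_derive t 1 (fun s => y s 0 a) (derive1 y t 0 a).
Proof.
move=> dy; have da := (derivable_mxP y t 1).1 dy 0 a.
by apply: DeriveDef => //; rewrite derive1E derive_mx // mxE.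
Qed.

Lemma th_der (theta : R -> R) (y : R) : is_kernel theta -> 0 < y ->
  is_derive y 1 (derive1n 2 theta) (derive1n 3 theta y).
Proof.
case=> d _ _ _ y0; apply: DeriveDef; first exact: d.
by rewrite [in RHS]derive1nS derive1E.
Qed.

Lemma mvt_le (f df : R -> R) (a b C : R) : a <= b ->
  (forall s : R, a <= s <= b -> is_derive s 1 f (df s)) ->
  (forall s, a <= s <= b -> df s <= C) -> f b - f a <= C * (b - a).
Proof.
move=> ab hd hC.
have cont : {within `[a, b], continuous f}.
  apply: derivable_within_continuous => s; rewrite in_itv /= => /hd [] //.
have hd' : forall s, s \in `]a, b[%R -> is_derive s 1 f (df s).
  by move=> s; rewrite in_itv /= => /andP[] /ltW ? /ltW ?; apply: hd; apply/andP.
have [c] := MVT_segment ab hd' cont.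
rewrite in_itv /= => cab ->; apply: ler_wpM2r; first by rewrite subr_ge0.
exact: hC.
Qed.

Section Dir.
Variable (m : nat).
Local Notation V := 'rV[R]_m.

Lemma Ldir0 (Phi : V -> R) (w p : V) :
  'D_w Phi p = derive1 (fun r : R => Phi (r *: w + p)) 0.
Proof.
rewrite derive1E /derive; do 2 f_equal; apply/funext => h /=.
by rewrite addr0 scale0r add0r [h *: (1:R)]mulr1.
Qed.

Lemma Ldir (Phi : V -> R) (q v : V) (s : R) : derivable Phi (s *: v + q) v ->
  is_derive s 1 (fun r : R => Phi (r *: v + q)) ('D_v Phi (s *: v + q)).
Proof.
move=> d.
have E : (fun h : R => h^-1 *: (((fun r : R => Phi (r *: v + q)) \o shift s) (h *: 1)
   - (fun r : R => Phi (r *: v + q)) s)) =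
  (fun h : R => h^-1 *: ((Phi \o shift (s *: v + q)) (h *: v) - Phi (s *: v + q))).
  apply/funext => h /=.
  by rewrite [h *: (1:R)]mulr1 scalerDl addrA.
apply: DeriveDef; first by rewrite /derivable E.
by rewrite /derive E.
Qed.

Lemma Lhom (Phi : V -> R) (p u : V) (c : R) : derivable Phi p u ->
  'D_(c *: u) Phi p = c * 'D_u Phi p.
Proof.
move=> d.
have di : derivable (@id R) 0 1 by exact: derivable_id.
have dc : derivable (fun r : R => r * c) 0 1.
  have dc : derivable (cst c : R -> R) 0 1 by exact: derivable_cst.
  by have := derivableM di dc.
have dm : is_derive (0:R) 1 (fun r : R => r * c) c.
  apply: DeriveDef => //.
  have := @deriveMr R R (@id R) c 0 1 di.
  by rewrite derive_id mulr1.
have dg : is_derive (0 * c) 1 (fun r : R => Phi (r *: u + p)) ('D_u Phi p).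
  rewrite mul0r; apply: DeriveDef.
    exact: ((derivable1P Phi p u).1 d).
  by rewrite -derive1E -Ldir0.
have H := @is_derive1_comp R (fun r : R => Phi (r *: u + p)) (fun r : R => r * c) 0 _ _ dg dm.
rewrite Ldir0 derive1E.
have -> : (fun r : R => Phi (r *: (c *: u) + p)) =
   (fun r : R => Phi (r *: u + p)) \o (fun r => r * c).
  by apply/funext => r /=; rewrite scalerA.
by rewrite derive_val mulrC.
Qed.


Lemma mvt_sym (g dg : R -> R) (h : R) :
  (forall s : R, `|s| <= `|h| -> is_derive s 1 g (dg s)) ->
  exists xi : R, `|xi| <= `|h| /\ g h - g 0 = dg xi * h.
Proof.
move=> hd.
have cont a b : (forall s : R, a <= s <= b -> `|s| <= `|h|) ->
    {within `[a, b], continuous g}.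
  move=> hab; apply: derivable_within_continuous => s.
  by rewrite in_itv /= => /hab /hd [].
have [h0|h0] := leP 0 h.
  have hd' : forall s, s \in `]0, h[%R -> is_derive s 1 g (dg s).
    move=> s; rewrite in_itv /= => /andP[/ltW s0 /ltW sh]; apply: hd.
    by rewrite !ger0_norm // (le_trans s0 sh).
  have ct : {within `[0, h], continuous g}.
    apply: cont => s /andP[s0 sh]; by rewrite !ger0_norm // (le_trans s0 sh).
  have [c] := MVT_segment h0 hd' ct.
  rewrite in_itv /= => /andP[c0 ch] ->; exists c; rewrite subr0; split => //.
  by rewrite !ger0_norm //; apply: le_trans ch.
have h0' : h <= 0 by apply: ltW.
have hd' : forall s, s \in `]h, 0[%R -> is_derive s 1 g (dg s).
  move=> s; rewrite in_itv /= => /andP[/ltW s0 /ltW sh]; apply: hd.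
  by rewrite !ler0_norm ?lerN2 // (le_trans s0 sh).
have ct : {within `[h, 0], continuous g}.
  apply: cont => s /andP[s0 sh]; by rewrite !ler0_norm ?lerN2 // (le_trans s0 sh).
have [c] := MVT_segment h0' hd' ct.
rewrite in_itv /= => /andP[hc c0] E; exists c; split.
  by rewrite !ler0_norm // lerN2.
by rewrite -opprB E sub0r mulrN opprK.
Qed.


Lemma Ladd (Phi : V -> R) (U : set V) (p u v : V) : open U -> U p ->
  (forall q w, U q -> derivable Phi q w) ->
  {within U, continuous (fun q => 'D_v Phi q)} ->
  'D_(u + v) Phi p = 'D_u Phi p + 'D_v Phi p.
Proof.
move=> oU Up dP cD.
apply: cvg_lim => //.
apply/cvgrPdist_lt => e e0.
have e2 : 0 < e / 2 by rewrite divr_gt0.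
have Hu : (fun h : R => h^-1 *: ((Phi \o shift p) (h *: u) - Phi p)) @ 0^' --> 'D_u Phi p.
  exact: (dP p u Up).
move/cvgrPdist_lt: Hu => /(_ _ e2) Hu.
have cp : {for p, continuous (fun q => 'D_v Phi q)}.
  by move: cD; rewrite continuous_open_subspace // => /(_ p (mem_set Up)).
have : \forall q \near p, U q /\ `|'D_v Phi p - 'D_v Phi q| < e / 2.
  near=> q; split.
  - near: q; apply: open_nbhs_nbhs; by split.
  - near: q; by move/cvgrPdist_lt: cp => /(_ _ e2).
move/nbhs_normP => [d /= d0 Hd].
set k := `|u| + `|v| + 1.
have k0 : 0 < k by rewrite /k ltr_pwDr // addr_ge0.
near=> h.
have hn0 : h != 0 by near: h; exact: nbhs_dnbhs_neq.
have hk : `|h| * k < d.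
  rewrite -ltr_pdivlMr //; near: h; apply: dnbhs0_lt; exact: divr_gt0.
have HuH : `|'D_u Phi p - h^-1 *: ((Phi \o shift p) (h *: u) - Phi p)| < e / 2.
  by near: h; exact: Hu.
pose g := fun r : R => Phi (r *: v + (h *: u + p)).
have hball s : `|s| <= `|h| -> `|p - (s *: v + (h *: u + p))| < d.
  move=> sh; apply: le_lt_trans hk.
  have -> : p - (s *: v + (h *: u + p)) = - (s *: v + h *: u).
    by rewrite addrA opprD addrCA subrr addr0.
  rewrite normrN (le_trans (ler_normD _ _)) // !normrZ /k.
  have := normr_ge0 u; have := normr_ge0 v; have := normr_ge0 h; have := normr_ge0 s.
  move=> *; nra.
have [xi [xih E]] : exists xi, `|xi| <= `|h| /\
    g h - g 0 = 'D_v Phi (xi *: v + (h *: u + p)) * h.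
  apply: mvt_sym => s sh; apply: Ldir; apply: dP; by have [] := Hd _ (hball s sh).
have [Uq Dq] := Hd _ (hball xi xih).
have sE : forall a b : R, a *: b = a * b := fun _ _ => erefl.
have e1 : Phi (h *: (u + v) + p) = g h by rewrite /g scalerDr addrA [h *: v + _]addrC.
have e2' : g 0 = Phi (h *: u + p) by rewrite /g scale0r add0r.
have -> : h^-1 *: (Phi (h *: (u + v) + p) - Phi p) =
    'D_v Phi (xi *: v + (h *: u + p)) + h^-1 *: (Phi (h *: u + p) - Phi p).
  have -> : Phi (h *: (u + v) + p) - Phi p = (g h - g 0) + (g 0 - Phi p).
    by rewrite e1 addrA subrK.
  rewrite scalerDr E e2' !sE mulrA mulrC mulrA mulfV // mul1r.
  by rewrite mulrC.
rewrite (splitr e).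
have key : forall A B D T : R, `|A + B - (D + T)| <= `|B - D| + `|A - T|.
  move=> A B D T; have -> : A + B - (D + T) = (B - D) + (A - T) by ring.
  exact: ler_normD.
apply: le_lt_trans (key _ _ _ _) _.
by apply: ltrD.
Unshelve. all: by end_near. Qed.


Lemma Llin (Phi : V -> R) (U : set V) (p w : V) : open U -> U p ->
  (forall q w, U q -> derivable Phi q w) ->
  (forall v, {within U, continuous (fun q => 'D_v Phi q)}) ->
  'D_w Phi p = \sum_(a < m) w 0 a * 'D_(delta_mx 0 a) Phi p.
Proof.
move=> oU Up dP cD.
rewrite {1}(row_sum_delta w).
apply: (big_ind2 (fun (u : V) (d : R) => 'D_u Phi p = d)).
- exact: derive0.
- move=> u1 d1 u2 d2 <- <-; exact: Ladd oU Up dP (cD u2).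
- move=> a _; exact: Lhom (dP _ _ Up).
Qed.


Lemma Lchain (Phi : V -> R) (U : set V) (x : R -> V) (t : R) : open U ->
  U (x t) -> lipschitz_on_set U Phi -> derivable x t 1 ->
  derivable Phi (x t) ('D_1 x t) ->
  is_derive t 1 (Phi \o x) ('D_('D_1 x t) Phi (x t)).
Proof.
move=> oU Ux [L HL] dx dP.
set p := x t; set w := 'D_1 x t; set D := 'D_w Phi p.
suff H : (fun h : R => h^-1 *: (((Phi \o x) \o shift t) (h *: 1) - (Phi \o x) t)) @ 0^' --> D.
  apply: DeriveDef; first by apply/cvg_ex; exists D.
  exact: cvg_lim.
apply/cvgrPdist_lt => e e0.
have e2 : 0 < e / 2 by rewrite divr_gt0.
set k := `|L| + 1.
have k0 : 0 < k by rewrite /k ltr_pwDr.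
have ek : 0 < e / 2 / k by rewrite divr_gt0.
have Hx : (fun h : R => h^-1 *: ((x \o shift t) (h *: 1) - x t)) @ 0^' --> w := dx.
move/cvgrPdist_lt: (Hx) => /(_ _ ek) Hxe.
move/cvgrPdist_lt: Hx => /(_ _ ltr01) Hx1.
have HP : (fun h : R => h^-1 *: ((Phi \o shift p) (h *: w) - Phi p)) @ 0^' --> D := dP.
move/cvgrPdist_lt: HP => /(_ _ e2) HP.
have : \forall q \near p, U q by apply: open_nbhs_nbhs; split.
move/nbhs_normP => [r /= r0 Hr].
set c := `|w| + 1.
have c0 : 0 < c by rewrite /c ltr_pwDr.
near=> h.
have hn0 : h != 0 by near: h; exact: nbhs_dnbhs_neq.
have hc : `|h| * c < r.
  rewrite -ltr_pdivlMr //; near: h; apply: dnbhs0_lt; exact: divr_gt0.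
have hek : `|w - h^-1 *: (x (h *: 1 + t) - x t)| < e / 2 / k by near: h; exact: Hxe.
have hx1 : `|w - h^-1 *: (x (h *: 1 + t) - x t)| < 1 by near: h; exact: Hx1.
have hep : `|D - h^-1 *: (Phi (h *: w + p) - Phi p)| < e / 2 by near: h; exact: HP.
set y := x (h *: 1 + t).
have hy : `|p - y| < r.
  apply: le_lt_trans hc.
  have -> : p - y = - (h *: (h^-1 *: (y - p))).
    by rewrite scalerA mulfV // scale1r opprB.
  rewrite normrN normrZ ler_wpM2l //.
  have -> : h^-1 *: (y - p) = w - (w - h^-1 *: (y - p)) by rewrite opprB [w + _]addrC subrK.
  rewrite (le_trans (ler_normB _ _)) // /c lerD2l ltW //.
have Uy : U y by apply: Hr.
have Uq : U (h *: w + p).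
  apply: Hr => /=; rewrite opprD addrCA subrr addr0 normrN normrZ.
  apply: le_lt_trans hc; rewrite ler_wpM2l // /c lerDl //.
have sE : forall a b : R, a *: b = a * b := fun _ _ => erefl.
rewrite /= -/p -/y.
have -> : h^-1 *: (Phi y - Phi p) =
   h^-1 *: (Phi (h *: w + p) - Phi p) - h^-1 *: (Phi (h *: w + p) - Phi y).
  by rewrite -scalerBr; congr (_ *: _); ring.
have key : `|h^-1 *: (Phi (h *: w + p) - Phi y)| <= `|L| * (e / 2 / k).
  rewrite normrZ.
  have := HL _ _ Uq Uy => HLq.
  apply: le_trans (_ : `|h^-1| * (L * `|h *: w + p - y|) <= _).
    by rewrite ler_wpM2l.
  rewrite mulrCA -normrZ.
  have -> : h^-1 *: (h *: w + p - y) = w - h^-1 *: (y - p).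
    by rewrite -addrA scalerDr scalerA mulVf // scale1r -scalerN opprB.
  apply: le_trans (_ : `|L| * `|w - h^-1 *: (y - p)| <= _).
    by rewrite ler_wpM2r // ler_norm.
  by rewrite ler_wpM2l // ltW.
have key2 : `|L| * (e / 2 / k) < e / 2.
  rewrite mulrA ltr_pdivrMr // /k; have := normr_ge0 L; nra.
have ineq : forall A B C : R, `|A - (B - C)| <= `|A - B| + `|C|.
  move=> A B C; have -> : A - (B - C) = (A - B) + C by ring.
  exact: ler_normD.
apply: le_lt_trans (ineq _ _ _) _; rewrite (splitr e) ltrD //.
exact: le_lt_trans key key2.
Unshelve. all: by end_near. Qed.



Lemma Lbound (Phi : V -> R) (U : set V) (p v : V) (L : R) : open U -> U p ->
  (forall p q : V, U p -> U q -> `|Phi p - Phi q| <= L * `|p - q|) ->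
  derivable Phi p v -> `|'D_v Phi p| <= `|L| * `|v|.
Proof.
move=> oU Up HL dP.
rewrite leNgt; apply/negP => hlt.
set D := 'D_v Phi p in hlt.
have eps : 0 < `|D| - `|L| * `|v| by rewrite subr_gt0.
have HP : (fun h : R => h^-1 *: ((Phi \o shift p) (h *: v) - Phi p)) @ 0^' --> D := dP.
move/cvgrPdist_lt: HP => /(_ _ eps) HP.
have : \forall q \near p, U q by apply: open_nbhs_nbhs; split.
move/nbhs_normP => [r /= r0 Hr].
set c := `|v| + 1.
have c0 : 0 < c by rewrite /c ltr_pwDr.
have : \forall h \near (0:R)^', False.
  near=> h.
  have hn0 : h != 0 by near: h; exact: nbhs_dnbhs_neq.
  have hc : `|h| * c < r.
    rewrite -ltr_pdivlMr //; near: h; apply: dnbhs0_lt; exact: divr_gt0.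
  have hep : `|D - h^-1 *: (Phi (h *: v + p) - Phi p)| < `|D| - `|L| * `|v|.
    by near: h; exact: HP.
  have Uq : U (h *: v + p).
    apply: Hr => /=; rewrite opprD addrCA subrr addr0 normrN normrZ.
    apply: le_lt_trans hc; rewrite ler_wpM2l // /c lerDl //.
  have hq : `|h^-1 *: (Phi (h *: v + p) - Phi p)| <= `|L| * `|v|.
    rewrite normrZ.
    apply: le_trans (_ : `|h^-1| * (`|L| * `|h *: v + p - p|) <= _).
      by rewrite ler_wpM2l // (le_trans (HL _ _ Uq Up)) // ler_wpM2r // ler_norm.
    by rewrite addrK normrZ normfV mulrCA mulKf ?normr_eq0.
  have := ler_normD (h^-1 *: (Phi (h *: v + p) - Phi p)) (D - h^-1 *: (Phi (h *: v + p) - Phi p)).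
  rewrite addrC subrK => hh.
  move: hq hep hh; set A := `|_|; set B := `|_|; lra.
move/filter_ex => [].
Unshelve. all: by end_near. Qed.

End Dir.

Lemma near_pos (s : R) : 0 < s -> \forall r \near s, 0 < r.
Proof.
move=> s0; near=> r.
suff : r \in `]0, +oo[%R by rewrite in_itv /= andbT.
near: r; apply: near_in_itvoy; by rewrite in_itv /= s0.
Unshelve. all: by end_near. Qed.

Lemma sum_ge_term (k : nat) (F : 'I_k -> R) (a : 'I_k) :
  (forall b, 0 <= F b) -> F a <= \sum_(b < k) F b.
Proof.
move=> F0; rewrite (bigD1 a) //= lerDl; apply: sumr_ge0 => b _; exact: F0.
Qed.

End H.

Lemma alg (R : realType) (T2 T3 v q acc S3 Sv eta : R) : T2 != 0 ->
  acc = T2^-1 * (v - Sv) - (2 * T2)^-1 * (T3 * q ^+ 2 - S3) - eta * q ->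
  T2 * (2 * q * acc) + q ^+ 2 * (T3 * q) - 2 * (v * q) =
  -(2 * eta) * (T2 * q ^+ 2) + q * (S3 - 2 * Sv).
Proof. move=> T0 ->; field; exact: T0. Qed.


Theorem proposition3p2 (R : realType) (n : nat) (theta : R -> R)
  (Phi : 'rV[R]_n.+1 -> R) (U : set 'rV[R]_n.+1) (eta : R)
  (x : R -> 'rV[R]_n.+1) :
  (0 < n)%N ->
  is_kernel theta ->
  open U -> simplex n `<=` U ->
  smooth_on U Phi -> lipschitz_on_set U Phi ->
  0 < eta ->
  (forall t : R, 0 < t ->
     [/\ simplex_relint n (x t),
         derivable x t 1,
         derivable (derive1 x) t 1 &
         forall a : 'I_n.+1,
           derive1 (derive1 x) t 0 a = ID_rhs theta Phi eta (x t) (derive1 x t) a]) ->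
  derive1 x t @[t --> +oo] --> 0.
Proof.
move=> hn hk oU sU [sm1 sm2] [L HL] heta hx.
have hk' := hk; case: hk' => _ _ th2pos th3neg.
set th2 := derive1n 2 theta in th2pos *.
set th3 := derive1n 3 theta in th3neg *.
have sE : forall a b : R, a *: b = a * b := fun _ _ => erefl.
pose K := fun s : R => \sum_(a < n.+1) th2 (x s 0 a) * (derive1 x s 0 a) ^+ 2.
pose P := fun s : R => Phi (x s).
pose E := fun s : R => K s - 2 * P s.
pose Pd := fun s : R => \sum_(a < n.+1) partial Phi a (x s) * derive1 x s 0 a.
pose Kd := fun s : R => \sum_(a < n.+1) (th2 (x s 0 a) *
   (2 * derive1 x s 0 a * derive1 (derive1 x) s 0 a) +
   derive1 x s 0 a ^+ 2 * (th3 (x s 0 a) * derive1 x s 0 a)).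
have Ux : forall s : R, 0 < s -> U (x s).
  move=> s s0; apply: sU; have [[pos sum] _ _ _] := hx s s0; split => // a; exact: ltW.
have xpos : forall (s : R) a, 0 < s -> 0 < x s 0 a.
  by move=> s a s0; have [[pos _] _ _ _] := hx s s0.
have xle1 : forall (s : R) a, 0 < s -> x s 0 a <= 1.
  move=> s a s0; have [[pos sum] _ _ _] := hx s s0.
  rewrite -sum (bigD1 a) //= lerDl sumr_ge0 // => b _; exact: ltW.
have sum0 : forall s : R, 0 < s -> \sum_(a < n.+1) derive1 x s 0 a = 0.
  move=> s s0; have [_ dx _ _] := hx s s0.
  have d1 : is_derive s 1 (\sum_(a < n.+1) (fun r => x r 0 a)) (\sum_(a < n.+1) derive1 x s 0 a).
    by apply: is_derive_sum => a; exact: coord_der.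
  have d2 : is_derive s 1 (\sum_(a < n.+1) (fun r => x r 0 a)) 0.
    apply: (@near_eq_is_derive R R R (cst (1:R))).
    near=> r.
    have r0 : 0 < r by near: r; exact: near_pos.
    rewrite fct_sumE /=; have [[_ sm] _ _ _] := hx r r0; by rewrite sm.
  by move: d1 d2 => [_ <-] [_ ->].
have dK : forall s : R, 0 < s -> is_derive s 1 K (Kd s).
  move=> s s0; have [_ dx dv _] := hx s s0.
  have dKa : forall a : 'I_n.+1, is_derive s 1
      (fun r => th2 (x r 0 a) * derive1 x r 0 a ^+ 2)
      (th2 (x s 0 a) * (2 * derive1 x s 0 a * derive1 (derive1 x) s 0 a) +
       derive1 x s 0 a ^+ 2 * (th3 (x s 0 a) * derive1 x s 0 a)).
    move=> a.
    have h1 : is_derive s 1 (th2 \o (fun r => x r 0 a))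
        (th3 (x s 0 a) * derive1 x s 0 a).
      apply: is_derive1_comp; last exact: coord_der.
      exact: th_der (xpos s a s0).
    have h2 : is_derive s 1 ((fun r => derive1 x r 0 a) ^+ 2)
        ((2%:R * (derive1 x s 0 a) ^+ 1) *: derive1 (derive1 x) s 0 a).
      by apply: is_deriveX; exact: coord_der.
    have h3 := is_deriveM h1 h2.
    apply: is_derive_eq h3 _.
    by rewrite /= !sE expr1; congr (_ + _ * _).
  have := is_derive_sum dKa.
  by rewrite fct_sumE.
have dPhi : forall q w, U q -> derivable Phi q w := fun q w Uq => sm1 [::] w q Uq.
have dP : forall s : R, 0 < s -> is_derive s 1 P (Pd s).
  move=> s s0; have [_ dx _ _] := hx s s0.
  have := @Lchain R n.+1 Phi U x s oU (Ux s s0) (ex_intro _ L HL) dx (dPhi _ _ (Ux s s0)).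
  rewrite (@Llin R n.+1 Phi U (x s) _ oU (Ux s s0) dPhi (fun v => sm2 [:: v])).
  move=> H; apply: is_derive_eq H _.
  rewrite /Pd; apply: eq_bigr => a _; by rewrite /partial derive1E mulrC.
have Kid : forall s : R, 0 < s -> Kd s - 2 * Pd s = - (2 * eta) * K s.
  move=> s s0.
  have [[pos _] _ _ ID] := hx s s0.
  rewrite /Kd /Pd mulr_sumr -sumrB.
  set Th := (\sum_(b < n.+1) (th2 (x s 0 b))^-1)^-1.
  set Sv := \sum_(b < n.+1) Th / th2 (x s 0 b) * partial Phi b (x s).
  set S3 := \sum_(b < n.+1) Th / th2 (x s 0 b) * th3 (x s 0 b) * derive1 x s 0 b ^+ 2.
  rewrite (eq_bigr (fun a => -(2*eta) * (th2 (x s 0 a) * derive1 x s 0 a ^+ 2)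
      + derive1 x s 0 a * (S3 - 2 * Sv))); last first.
    move=> a _; apply: alg; last exact: (ID a).
    by rewrite gt_eqF // th2pos // xpos.
  rewrite big_split /= -mulr_sumr -mulr_suml sum0 // mul0r addr0.
  by [].
have dE : forall s : R, 0 < s -> is_derive s 1 E (- (2 * eta) * K s).
  move=> s s0; have := is_deriveB (dK s s0) (is_deriveZ 2 (dP s s0)).
  move=> H; apply: is_derive_eq H _.
  by rewrite sE Kid.
have sqr0 : forall y : R, 0 <= y ^+ 2 := fun y => sqr_ge0 y.
have K0 : forall s : R, 0 < s -> 0 <= K s.
  move=> s s0; apply: sumr_ge0 => a _; apply: mulr_ge0 => //.
  exact: ltW (th2pos _ (xpos s a s0)).
set c := th2 1.
have c0 : 0 < c by apply: th2pos.
have th2c : forall (s : R) a, 0 < s -> c <= th2 (x s 0 a).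
  move=> s a s0.
  have := @mvt_le R th2 th3 (x s 0 a) 1 0 (xle1 s a s0).
  rewrite mul0r subr_le0; apply.
  - move=> r /andP[r1 _]; apply: th_der => //; exact: lt_le_trans (xpos s a s0) r1.
  - move=> r /andP[r1 _]; apply: ltW; apply: th3neg; exact: lt_le_trans (xpos s a s0) r1.
have Kc : forall (s : R) a, 0 < s -> c * derive1 x s 0 a ^+ 2 <= K s.
  move=> s a s0.
  apply: le_trans (_ : th2 (x s 0 a) * derive1 x s 0 a ^+ 2 <= _).
    by rewrite ler_wpM2r ?th2c.
  apply: (@sum_ge_term R n.+1 (fun b => th2 (x s 0 b) * derive1 x s 0 b ^+ 2)) => b; cbv beta.
  apply: mulr_ge0; [exact: ltW (th2pos _ (xpos s b s0)) | exact: sqr0].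
have Pb : forall s : R, 0 < s -> `|P s - P 1| <= `|L|.
  move=> s s0; apply: le_trans (HL _ _ (Ux s s0) (Ux 1 ltr01)) _.
  have nb : `|x s - x 1| <= 1.
    rewrite [leLHS]/Num.Def.normr/= mx_normrE (bigmax_le _ ler01) //= => -[i j] _.
    rewrite !mxE (ord1 i).
    have := xpos s j s0; have := xle1 s j s0; have := xpos 1 j ltr01; have := xle1 1 j ltr01.
    move=> *; rewrite ler_norml; apply/andP; split; lra.
  apply: le_trans (_ : `|L| * `|x s - x 1| <= _).
    by rewrite ler_wpM2r // ler_norm.
  by rewrite -[leRHS]mulr1 ler_wpM2l.
have Edecr : forall s s' : R, 0 < s -> s <= s' -> E s' <= E s.
  move=> s s' s0 ss'.
  have := @mvt_le R E (fun r => - (2 * eta) * K r) s s' 0 ss'.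
  rewrite mul0r subr_le0; apply.
  - move=> r /andP[r1 _]; apply: dE; exact: lt_le_trans s0 r1.
  - move=> r /andP[r1 _]; rewrite mulNr oppr_le0; apply: mulr_ge0.
      by rewrite mulr_ge0 // ltW.
    apply: K0; exact: lt_le_trans s0 r1.
set M := E 1 + 2 * (P 1 + `|L|).
have KM : forall s : R, 1 <= s -> K s <= M.
  move=> s s1; have s0 : 0 < s := lt_le_trans ltr01 s1.
  have := Edecr 1 s ltr01 s1; have := Pb s s0; rewrite /M /E ler_norml.
  move=> /andP[h1 h2] h3; lra.
have M0 : 0 <= M by apply: le_trans (K0 1 ltr01) (KM 1 (lexx _)).
have vaM : forall (s : R) a, 1 <= s -> derive1 x s 0 a ^+ 2 <= M / c.
  move=> s a s1; rewrite ler_pdivlMr // mulrC.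
  apply: le_trans (Kc s a _) (KM s s1); exact: lt_le_trans ltr01 s1.
set B := \sum_(a < n.+1) `|L| * `|delta_mx 0 a : 'rV[R]_n.+1|.
have B0 : 0 <= B by apply: sumr_ge0 => a _; apply: mulr_ge0.
have Mc0 : 0 <= M / c by apply: divr_ge0 => //; exact: ltW.
set C := 2 * B * (1 + M / c) + 1.
have C0 : 0 < C.
  have : 0 <= 2 * B * (1 + M / c) by rewrite !mulr_ge0 // addr_ge0.
  by rewrite /C => H; apply: lt_le_trans ltr01 _; rewrite lerDr.
have Kdle : forall s : R, 1 <= s -> Kd s <= C.
  move=> s s1; have s0 : 0 < s := lt_le_trans ltr01 s1.
  have e := Kid s s0.
  have -> : Kd s = -(2 * eta) * K s + 2 * Pd s by rewrite -e; ring.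
  have hPd : Pd s <= B * (1 + M / c).
    rewrite /Pd /B mulr_suml; apply: ler_sum => a _.
    have hv := @Lbound R n.+1 Phi U (x s) (delta_mx 0 a) L oU (Ux s s0) HL
      (dPhi _ _ (Ux s s0)).
    have hq : `|derive1 x s 0 a| <= 1 + M / c.
      have := vaM s a s1; have := real_normK (num_real (derive1 x s 0 a)).
      have := normr_ge0 (derive1 x s 0 a).
      set y := derive1 x s 0 a; set z := `|y|; move=> *; nra.
    apply: le_trans (ler_norm _) _; rewrite normrM.
    apply: ler_pM => //; exact: hv.
  have hK := K0 s s0.
  have hEK : 0 <= 2 * eta * K s by rewrite mulr_ge0 // mulr_ge0 // ltW.
  rewrite /C; move: hPd hEK; move=> *; nra.
have Kinc : forall s s' : R, 1 <= s -> s <= s' -> K s' - K s <= C * (s' - s).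
  move=> s s' s1 ss'; apply: (@mvt_le R K Kd) => // r /andP[r1 _].
    apply: dK; exact: lt_le_trans ltr01 (le_trans s1 r1).
  apply: Kdle; exact: le_trans s1 r1.
have Eb : forall s : R, 0 < s -> - (2 * (P 1 + `|L|)) <= E s.
  move=> s s0; have := K0 s s0; have := Pb s s0; rewrite /E ler_norml.
  move=> /andP[h1 h2] h3; lra.
pose f := fun r : R => - E (Num.max r 1).
have max1 : forall r : R, 1 <= Num.max r 1 by move=> r; rewrite le_max lexx orbT.
have hsup : has_sup (range f).
  split; first by exists (f 0); exists 0.
  exists (2 * (P 1 + `|L|)) => y [r _ <-]; rewrite /f lerNl.
  apply: Eb; exact: lt_le_trans ltr01 (max1 r).
have Tclose : forall dd : R, 0 < dd -> exists2 T : R, 1 <= T &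
    forall s : R, T <= s -> E T - E s < dd.
  move=> dd dd0; have [y [r0 _ <-] hr] := sup_adherent dd0 hsup.
  exists (Num.max r0 1) => // s Ts.
  have s1 : 1 <= s := le_trans (max1 r0) Ts.
  have fs : f s <= sup (range f) by apply: sup_upper_bound => //; exists s.
  move: hr fs; rewrite /f (max_l s1); lra.
apply/(@cvgrPdist_le _ _ _ _ _ (derive1 x) 0) => eps eps0.
set kap := c * eps ^+ 2.
have kap0 : 0 < kap by rewrite mulr_gt0 // exprn_gt0.
set h := kap / (2 * C).
have h0 : 0 < h by rewrite divr_gt0 // mulr_gt0.
have Ch : C * h = kap / 2 by rewrite /h; field; rewrite gt_eqF.
set dd := eta * kap * h.
have dd0 : 0 < dd by rewrite mulr_gt0 // mulr_gt0.
have [T T1 HT] := Tclose dd dd0.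
near=> s.
have sTh : T + h <= s by near: s; apply: nbhs_pinfty_ge; rewrite num_real.
have sh1 : 1 <= s - h by rewrite lerBrDr; apply: le_trans sTh; rewrite lerD2r.
have s1 : 1 <= s by apply: le_trans sh1 _; rewrite lerBlDr lerDl ltW.
have s0 : 0 < s := lt_le_trans ltr01 s1.
have Ks : K s <= kap.
  rewrite leNgt; apply/negP => Ks.
  have low : forall r : R, s - h <= r <= s -> kap / 2 <= K r.
    move=> r /andP[r1 r2].
    have := Kinc r s (le_trans sh1 r1) r2.
    have : C * (s - r) <= C * h.
      by apply: ler_wpM2l; [exact: ltW | lra].
    rewrite Ch => *; lra.
  have Edrop : E s - E (s - h) <= (- (2 * eta) * (kap / 2)) * (s - (s - h)).
    apply: (@mvt_le R E (fun r => - (2 * eta) * K r)).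
    - by rewrite lerBlDr lerDl ltW.
    - move=> r /andP[r1 _]; apply: dE; exact: lt_le_trans ltr01 (le_trans sh1 r1).
    - move=> r hr; rewrite !mulNr lerN2 ler_wpM2l ?low //.
      by rewrite mulr_ge0 // ltW.
  have E1 : E (s - h) <= E T by apply: Edecr => //; [exact: lt_le_trans ltr01 T1 | rewrite lerBrDr].
  have Ts : T <= s by apply: le_trans sTh; rewrite lerDl ltW.
  have E2 := HT s Ts.
  have hh : s - (s - h) = h by ring.
  rewrite hh in Edrop; move: E2; rewrite /dd => E2.
  lra.
rewrite sub0r normrN [leLHS]/Num.Def.normr/= mx_normrE (bigmax_le _ (ltW eps0)) //= => -[i j] _.
rewrite (ord1 i).
have hj := Kc s j s0.
have hsq : derive1 x s 0 j ^+ 2 <= eps ^+ 2.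
  by rewrite -(ler_pM2l c0); apply: le_trans hj (le_trans Ks _).
have := real_normK (num_real (derive1 x s 0 j)).
have := normr_ge0 (derive1 x s 0 j).
move: hsq; set y := derive1 x s 0 j; set z := `|y|; move=> *; nra.
Unshelve. all: by end_near. Qed.
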